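(* Let $(E,\mathcal{E},\nu)$ be a $\sigma$-finite measure space, $\phi$ a Young function satisfying the $\Delta_2$-condition, $w$ a weight function, and $\Psi:E\to E$ a non-singular measurable transformation inducing the composition operator $C_\Psi f=f\circ\Psi$ on the Orlicz-Lorentz space $L_{(\phi,w)}$, such that $\Psi(S)\in\mathcal{E}$ for every $S\in\mathcal{E}$. If $\mathcal{A}(C_\Psi)=\infty$, then there exists a sequence $(A_m)$ of measurable subsets of $E$ such that for all $m>1$: (1) $0<\nu(A_m)<\infty$; (2) $A_m\subseteq\Psi^{m-1}(B)$ for some $B\in\mathcal{E}$; (3) $A_m\notin\{\Psi^m(S): S\in\mathcal{E},\ \nu(S)>0\}$.
   Context: A Young function is a convex $\phi:[0,\infty)\to[0,\infty)$ with $\phi(x)=0\iff x=0$ and $\lim_{x\to\infty}\phi(x)=\infty$; $\Delta_2$-condition: $\phi(2x)\le k\phi(x)$ for some $k>0$ and all $x>0$. A weight function is a non-increasing locally integrable $w:(0,\infty)\to(0,\infty)$ with $\int_0^\infty w=\infty$. For measurable $f$, $\nu_f(s)=\nu\{|f|>s\}$, $f^*(t)=\inf\{s>0:\nu_f(s)\le t\}$; $L_{(\phi,w)}$ is the space of measurable $f:E\to\mathbb{C}$ with $\int_0^\infty\phi(\alpha f^*(t))w(t)\,dt<\infty$ for some $\alpha>0$, with the Luxemburg norm. $\Psi$ non-singular: $\nu(\Psi^{-1}(S))=0$ whenever $\nu(S)=0$; $\Psi^0=\mathrm{id}$. The ascent $\mathcal{A}(T)$ is the smallest integer $m$ with $\mathcal{N}(T^m)=\mathcal{N}(T^{m+1})$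 ($\mathcal{N}$ = kernel), and $\infty$ if no such $m$ exists. *)

(* Defs.v *)
From HB Require Import structures.
From mathcomp Require Import all_boot all_order all_algebra.
From mathcomp Require Import all_classical all_reals all_analysis.
From mathcomp Require Import complex.

Set Implicit Arguments.
Unset Strict Implicit.
Unset Printing Implicit Defensive.
Import Order.TTheory GRing.Theory Num.Theory.
Local Open Scope classical_set_scope.
Local Open Scope ring_scope.

Section OrliczLorentz.
Variable R : realType.

Definition cre (z : R[i]) : R := let: Complex a _ := z in a.
Definition cim (z : R[i]) : R := let: Complex _ b := z in b.
Definition cabs (z : R[i]) : R := Num.sqrt (cre z ^+ 2 + cim z ^+ 2).

(** Young function: phi : [0,oo) -> [0,oo), convex, phi x = 0 <-> x = 0,
    phi x -> oo as x -> oo (only the values on [0,oo) matter). *)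
Definition young_function (phi : R -> R) : Prop :=
  (forall x, 0 <= x -> 0 <= phi x) /\
  (forall x y t, 0 <= x -> 0 <= y -> 0 <= t <= 1 ->
     phi (t * x + (1 - t) * y) <= t * phi x + (1 - t) * phi y) /\
  (forall x, 0 <= x -> (phi x = 0 <-> x = 0)) /\
  (phi x @[x --> +oo] --> +oo).

Definition delta2 (phi : R -> R) : Prop :=
  exists k : R, 0 < k /\ forall x, 0 < x -> phi (2 * x) <= k * phi x.

Definition weight_function (w : R -> R) : Prop :=
  (forall t, 0 < t -> 0 < w t) /\
  (forall s t, 0 < s -> s <= t -> w t <= w s) /\
  (forall t, 0 < t ->
     (@lebesgue_measure R).-integrable
        `]0, t[ (fun x => (w x)%:E)) /\
  ((\int[lebesgue_measure]_(x in `]0%R, +oo[%classic) (w x)%:E)%E = +oo%E).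

Definition phiE (phi : R -> R) (x : \bar R) : \bar R :=
  match x with
  | r%:E => (phi r)%:E
  | +oo%E => +oo%E
  | -oo%E => 0%E
  end.

Variables (d : measure_display) (E : measurableType d).

Definition cmeasurable (f : E -> R[i]) : Prop :=
  measurable_fun setT (fun x => cre (f x)) /\
  measurable_fun setT (fun x => cim (f x)).

Definition distrib (nu : {measure set E -> \bar R}) (f : E -> R[i]) (s : R)
  : \bar R := nu [set x | s < cabs (f x)].

Definition rearr (nu : {measure set E -> \bar R}) (f : E -> R[i]) (t : R)
  : \bar R :=
  ereal_inf [set s%:E | s in [set s : R | 0 < s /\ (distrib nu f s <= t%:E)%E]].

Definition orlicz_lorentz (nu : {measure set E -> \bar R}) (phi w : R -> R)
  : set (E -> R[i]) :=
  [set f | cmeasurable f /\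
     exists alpha : R, 0 < alpha /\
       ((\int[lebesgue_measure]_(t in `]0%R, +oo[%classic)
          (phiE phi (alpha%:E * rearr nu f t) * (w t)%:E))%E < +oo)%E].

Definition non_singular (nu : {measure set E -> \bar R}) (Psi : E -> E) : Prop :=
  forall S, measurable S -> nu S = 0%E -> nu (Psi @^-1` S) = 0%E.

Definition comp_kernel (nu : {measure set E -> \bar R}) (phi w : R -> R)
  (Psi : E -> E) (m : nat) : set (E -> R[i]) :=
  [set f | orlicz_lorentz nu phi w f /\
           {ae nu, forall x, f (iter m Psi x) = 0}].

Definition ascent_infinite (nu : {measure set E -> \bar R}) (phi w : R -> R)
  (Psi : E -> E) : Prop :=
  ~ exists m : nat, comp_kernel nu phi w Psi m = comp_kernel nu phi w Psi m.+1.

End OrliczLorentz.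

(* Main.v *)
Require Import Defs.
From HB Require Import structures.
From mathcomp Require Import all_boot all_order all_algebra.
From mathcomp Require Import all_classical all_reals all_analysis.
From mathcomp Require Import complex.
Import Order.TTheory GRing.Theory Num.Theory.
Local Open Scope classical_set_scope.
Local Open Scope ring_scope.

Section H.
Variables (R : realType) (d : measure_display) (E : measurableType d)
  (nu : {measure set E -> \bar R}) (Psi : E -> E).
Hypothesis mPsi : measurable_fun setT Psi.
Hypothesis nsPsi : non_singular nu Psi.
Hypothesis imPsi : forall S, measurable S -> measurable (Psi @` S).

Lemma preT S : measurable S -> measurable (Psi @^-1` S).
Proof. by move=> mS; rewrite -[_ @^-1` _]setTI; apply: mPsi. Qed.

Lemma iter_pre_meas n S : measurable S -> measurable (iter n Psi @^-1` S).
Proof.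
elim: n S => [|n IH] S mS //=.
have -> : iter n.+1 Psi @^-1` S = iter n Psi @^-1` (Psi @^-1` S).
  by [].
by apply: IH; apply: preT.
Qed.

Lemma iter_pre_null n S : measurable S -> nu S = 0%E -> nu (iter n Psi @^-1` S) = 0%E.
Proof.
elim: n S => [|n IH] S mS S0 //=.
have -> : iter n.+1 Psi @^-1` S = iter n Psi @^-1` (Psi @^-1` S).
  by [].
by apply: IH; [apply: preT| apply: nsPsi].
Qed.

Lemma iter_img_meas n S : measurable S -> measurable (iter n Psi @` S).
Proof.
elim: n => [|n IH] mS /=.
  by rewrite image_id.
have -> : iter n.+1 Psi @` S = Psi @` (iter n Psi @` S).
  apply/seteqP; split => x /=.
    by case=> y Sy <-; exists (iter n Psi y) => //; exists y.
  by case=> y [z Sz <-] <-; exists z => //.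
by apply: imPsi; apply: IH.
Qed.


Lemma ae_step (f : E -> R[i]) j :
  {ae nu, forall x, f (iter j Psi x) = 0} -> {ae nu, forall x, f (iter j.+1 Psi x) = 0}.
Proof.
rewrite /prop_near1 /nbhs /= /almost_everywhere /=.
move=> [N [mN N0 sub]]; exists (Psi @^-1` N); split.
- exact: preT.
- exact: nsPsi.
- move=> x /= Hx; apply: sub => /= H; apply: Hx.
  have E1 : iter j.+1 Psi x = iter j Psi (Psi x) by exact: iterSr.
  simpl in E1; rewrite E1.
  exact: H.
Qed.

Lemma key (f : E -> R[i]) k (cmf : cmeasurable f)
 (H1 : {ae nu, forall x, f (iter k.+1 Psi x) = 0})
 (H2 : ~ {ae nu, forall x, f (iter k Psi x) = 0})
 (sf : sigma_finite setT nu) :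
 exists A, [/\ measurable A, (0 < nu A)%E /\ (nu A < +oo)%E,
   (exists B, measurable B /\ A `<=` iter k Psi @` B) &
   ~ (exists S, measurable S /\ (0 < nu S)%E /\ A = iter k.+1 Psi @` S)].
Proof.
pose D := [set y | f y <> 0].
have mD : measurable D.
  have -> : D = ((fun y => cre (f y)) @^-1` (~` [set 0])) `|` ((fun y => cim (f y)) @^-1` (~` [set 0])).
    apply/seteqP; split => y /=.
      rewrite /D /=; case: (f y) => a b /=.
      have [->|?] := eqVneq a 0; last by left; apply/eqP.
      have [->|?] := eqVneq b 0; last by right; apply/eqP.
      by move=> H; exfalso; apply: H.
    by rewrite /D /=; case: (f y) => a b /= [] Hab [] Ha Hb.
  case: cmf => mre mim.
  apply: measurableU.
    rewrite -[_ @^-1` _]setTI; apply: mre => //; apply: measurableC; exact: measurable_set1.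
  rewrite -[_ @^-1` _]setTI; apply: mim => //; apply: measurableC; exact: measurable_set1.
pose W := iter k Psi @^-1` D.
have mW : measurable W by apply: iter_pre_meas.
have W0 : nu W != 0%E.
  apply/negP => /eqP W0; apply: H2.
  rewrite /prop_near1 /nbhs /= /almost_everywhere /=.
  exists W; split => // x /= Hx; exact: Hx.
pose A' := iter k Psi @` W.
have mA' : measurable A' by apply: iter_img_meas.
have A'D : A' `<=` D by move=> y [x Wx <-].
have A'0 : nu A' != 0%E.
  apply/negP => /eqP A0; move/negP: W0; apply; apply/eqP.
  apply/eqP; rewrite eq_le measure_ge0 andbT.
  rewrite -(iter_pre_null k A' mA' A0).
  by apply: le_measure; rewrite ?inE //; [apply: iter_pre_meas | move=> x Wx /=; exists x].
case: sf => F FT mF.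
have [i Hi] : exists i, nu (A' `&` F i) != 0%E.
  apply: contrapT => /forallNP H0.
  move/negP: A'0; apply; apply/eqP.
  apply/(negligibleP _ mA').
  have -> : A' = \bigcup_i (A' `&` F i).
    by rewrite -setI_bigcupr -FT setIT.
  apply: negligible_bigcup => j; apply/negligibleP.
    by apply: measurableI => //; case: (mF j).
  by move/negP: (H0 j); rewrite negbK => /eqP.
have mFi : measurable (F i) by case: (mF i).
exists (A' `&` F i); split.
- exact: measurableI.
- split; first by rewrite lt0e Hi measure_ge0.
  apply: le_lt_trans (proj2 (mF i)).
  apply: le_measure; [rewrite inE; exact: measurableI | by rewrite inE | apply: subIsetr].
- by exists W; split => //; apply: subIsetl.
- move=> [S [mS [S0 ES]]].
  move: H1; rewrite /prop_near1 /nbhs /= /almost_everywhere /=.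
  move=> [N [mN N0 sub]].
  have SN : S `<=` N.
    move=> x Sx; apply: sub => /= H.
    have : (A' `&` F i) (iter k.+1 Psi x) by rewrite ES; exists x.
    by move=> [/A'D].
  have : (nu S <= nu N)%E by apply: le_measure; rewrite ?inE.
  by rewrite N0 leNgt S0.
Qed.

End H.

Theorem theorem3p9 (R : realType) (d : measure_display) (E : measurableType d)
  (nu : {measure set E -> \bar R}) (phi w : R -> R) (Psi : E -> E) :
  sigma_finite setT nu ->
  young_function phi -> delta2 phi ->
  weight_function w ->
  measurable_fun setT Psi ->
  non_singular nu Psi ->
  (forall f, orlicz_lorentz nu phi w f -> orlicz_lorentz nu phi w (f \o Psi)) ->
  (forall S, measurable S -> measurable (Psi @` S)) ->
  ascent_infinite nu phi w Psi ->
  exists A : nat -> set E,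
    forall m : nat, (1 < m)%N ->
      [/\ measurable (A m),
          (0 < nu (A m))%E /\ (nu (A m) < +oo)%E,
          (exists B, measurable B /\ A m `<=` iter m.-1 Psi @` B) &
          ~ (exists S, measurable S /\ (0 < nu S)%E /\ A m = iter m Psi @` S)].
Proof.
move=> sf _ _ _ mPsi nsPsi _ imPsi asc.
suff H : forall m : nat, exists Am : set E, (1 < m)%N ->
      [/\ measurable Am,
          (0 < nu Am)%E /\ (nu Am < +oo)%E,
          (exists B, measurable B /\ Am `<=` iter m.-1 Psi @` B) &
          ~ (exists S, measurable S /\ (0 < nu S)%E /\ Am = iter m Psi @` S)].
  by have [A HA] := choice H; exists A.
case=> [|[|k]]; try by exists set0.
have [f [Kf2 nK1]] : exists f, comp_kernel nu phi w Psi k.+2 f /\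
    ~ comp_kernel nu phi w Psi k.+1 f.
  apply: contrapT => Hn; apply: asc; exists k.+1.
  apply/seteqP; split => f Kf.
    by case: Kf => ol ae; split => //; apply: ae_step.
  apply: contrapT => nK; apply: Hn; exists f; split => //.
case: Kf2 => ol ae2.
have nae : ~ {ae nu, forall x, f (iter k.+1 Psi x) = 0} by move=> h; apply: nK1.
have [A HA] := @key R d E nu Psi mPsi nsPsi imPsi f k.+1 (proj1 ol) ae2 nae sf.
by exists A.
Qed.
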